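(* Let $d\ge1$. There is $\kappa>0$, depending only on $d$, such that the following holds. Let $N\ge1$ be an integer and $p\in(1-\kappa,1]$, and let $\tilde{\mathbb{P}}$ assign to each vertex $i$ of the graph $\Xi$ (defined in the context) a value $\eta(i)\in\{0,1\}$, independently, with $\tilde{\mathbb{P}}(\eta(i)=1)=p$. Then there are constants $\varphi>0$ and $c_1,c_2>0$, depending only on $p$ and $d$, such that \[ \tilde{\mathbb{P}}\bigl(T(x)<\varphi\|x\|\bigr)\le c_1e^{-c_2\|x\|}\qquad\text{for all }x\in\mathcal{A}. \]
   Context: $\mathcal{A}=\{(x_1,\dots,x_d)\in\mathbb{Z}^d:x_1+\dots+x_d\equiv0\pmod2\}$ is the even sublattice. $\Xi=\mathcal{A}\times\{0,\dots,N-1\}$ is a graph in which $(x,k)$ and $(y,\ell)$ are adjacent if either $x=y$ and $k=\ell\pm1$ (mod $N$), or $k=\ell$ and $x,y$ are next-nearest neighbours in $\mathbb{Z}^d$ (i.e. distinct points at graph distance 2 in $\mathbb{Z}^d$). For $x\in\mathcal{A}$, the passage time is $T(x)=\inf_\pi\sum_{i\in\pi}\eta(i)$, the infimum over all paths $\pi$ in $\Xi$ from $(0,0)$ to $(x,0)$. $\|x\|$ is the (Euclidean) norm. *)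

(* Defs.v *)
From HB Require Import structures.
From mathcomp Require Import all_boot all_order all_algebra.
From mathcomp Require Import all_classical all_reals all_analysis.
Set Implicit Arguments. Unset Strict Implicit. Unset Printing Implicit Defensive.
Import Order.TTheory GRing.Theory Num.Theory.
Local Open Scope classical_set_scope.
Local Open Scope ring_scope.

(* A point of Z^d and a layer index: the ambient type of vertices of Xi. *)
Definition vertex (d : nat) : Type := ({ffun 'I_d -> int} * nat)%type.

Definition inA (d : nat) (x : {ffun 'I_d -> int}) : bool :=
  (2 %| \sum_(i < d) x i)%Z.

Definition inXi (d N : nat) (v : vertex d) : bool :=
  inA v.1 && (v.2 < N)%N.

Definition l1dist (d : nat) (x y : {ffun 'I_d -> int}) : nat :=
  (\sum_(i < d) `|x i - y i|%N)%N.

Definition adjXi (d N : nat) (u v : vertex d) : bool :=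
  ((u.1 == v.1) && ((u.2 == (v.2 + 1) %% N)%N || (v.2 == (u.2 + 1) %% N)%N))
  || ((u.2 == v.2) && (l1dist u.1 v.1 == 2)%N).

Definition origin (d : nat) : vertex d := ([ffun=> 0], 0%N).

Definition is_xpath (d N : nat) (x : {ffun 'I_d -> int}) (pi : seq (vertex d))
  : bool :=
  match pi with
  | [::] => false
  | v0 :: s => [&& v0 == origin d, path (adjXi N) v0 s,
                   last v0 s == (x, 0%N) & all (inXi N) pi]
  end.

Definition path_weight (d : nat) (Omega : Type) (eta : vertex d -> Omega -> bool)
  (pi : seq (vertex d)) (w : Omega) : nat :=
  (\sum_(v <- pi) (eta v w : nat))%N.

Definition passage_time (R : realType) (d N : nat) (Omega : Type)
  (eta : vertex d -> Omega -> bool) (x : {ffun 'I_d -> int}) (w : Omega)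
  : \bar R :=
  ereal_inf [set ((path_weight eta pi w)%:R)%:E | pi in [set pi | is_xpath N x pi]].

Definition normx (R : realType) (d : nat) (x : {ffun 'I_d -> int}) : R :=
  Num.sqrt (\sum_(i < d) ((x i)%:~R) ^+ 2).

(* (eta(i))_{i in Xi} are independent {0,1}-valued with P(eta(i) = 1) = p:
   each eta(i) is measurable, and for every finite family of distinct vertices
   the joint law is the product of Bernoulli(p) laws. *)
Definition bernoulli_field (R : realType) (d N : nat) (dm : measure_display)
  (Omega : measurableType dm) (P : probability Omega R)
  (eta : vertex d -> Omega -> bool) (p : R) : Prop :=
  (forall v, inXi N v -> measurable [set w | eta v w]) /\
  (forall (S : seq (vertex d)) (b : vertex d -> bool),
      uniq S -> all (inXi N) S ->
      P (\bigcap_(v in [set` S]) [set w | eta v w = b v])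
      = (\prod_(v <- S) (if b v then p else 1 - p))%:E).

(* Main.v *)
Require Import Defs.
From HB Require Import structures.
From mathcomp Require Import all_boot all_order all_algebra.
From mathcomp Require Import all_classical all_reals all_analysis.
From mathcomp Require Import zify ring lra.
Import Order.TTheory GRing.Theory Num.Theory.
Local Open Scope classical_set_scope.
Local Open Scope ring_scope.
Set Implicit Arguments. Unset Strict Implicit.

Definition Step (d : nat) : finType := (bool + {ffun 'I_d -> 'I_5})%type.

Definition app (d N : nat) (st : Step d) (u : vertex d) : vertex d :=
  match st with
  | inl b => (u.1, if b then ((u.2 + 1) %% N)%N else ((u.2 + N.-1) %% N)%N)
  | inr f => ([ffun i => u.1 i + ((f i : nat)%:Z - 2)], u.2)
  end.

Arguments app {d} N st u.

Lemma l1_coord (d : nat) (x y : {ffun 'I_d -> int}) i : (`|x i - y i|%N <= l1dist x y)%N.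
Proof. by rewrite /l1dist (bigD1 i) //= leq_addr. Qed.

Lemma step_exists d N (u v : vertex d) : (0 < N)%N -> inXi N u -> inXi N v ->
  adjXi N u v -> exists st : Step d, v = app N st u.
Proof.
case: u => [y k]; case: v => [z l] N0 /andP[_ /= kN] /andP[_ /= lN].
rewrite /adjXi /=; case/orP.
  case/andP=> /eqP <- /orP[/eqP kl|/eqP lk].
    exists (inl false); congr (_, _) => /=; rewrite kl modnDml.
    rewrite -addnA addnC; case: N N0 lN {kN kl} => //= n _ ln.
    by rewrite add1n modnDl modn_small.
  by exists (inl true); rewrite /= lk.
case/andP=> /eqP <- /eqP h.
exists (inr [ffun i => inord (absz (z i - y i + 2)%R)]); congr (_, _).
apply/ffunP => i; rewrite !ffunE.
have := @l1_coord _ y z i; rewrite h => hi.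
rewrite inordK; last by lia.
have -> : (absz (z i - y i + 2)%R)%:Z = z i - y i + 2 by lia.
by rewrite addrK addrC subrK.
Qed.


Definition walk (d N : nat) (u : vertex d) (s : seq (Step d)) : seq (vertex d) :=
  scanl (fun v st => app N st v) u s.
Arguments walk {d} N u s.

Lemma path_steps (d N : nat) (q : seq (vertex d)) (u : vertex d) : (0 < N)%N ->
  path (adjXi N) u q -> all (inXi N) (u :: q) ->
  exists s : seq (Step d), walk N u s = q.
Proof.
move=> N0; elim: q u => [|v q IH] u /=; first by exists [::].
case/andP=> huv hp /and3P[hu hv hq].
have [st hst] := step_exists N0 hu hv huv.
have [s hs] := IH _ hp (introT andP (conj hv hq)).
by exists (st :: s); rewrite /walk /= -hst -/(walk N _ s) hs.
Qed.

Lemma l1_tri (d : nat) (x y z : {ffun 'I_d -> int}) :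
  (l1dist x z <= l1dist x y + l1dist y z)%N.
Proof.
rewrite /l1dist -big_split /=; apply: leq_sum => i _; lia.
Qed.

Lemma l1_adj (d N : nat) (u v : vertex d) : adjXi N u v -> (l1dist u.1 v.1 <= 2)%N.
Proof.
case/orP => /andP[h1 h2].
  rewrite (eqP h1) /l1dist big1 // => i _; rewrite subrr.
  by [].
by rewrite (eqP h2).
Qed.

Lemma path_l1 (d N : nat) (q : seq (vertex d)) (u : vertex d) :
  path (adjXi N) u q -> (l1dist u.1 (last u q).1 <= 2 * size q)%N.
Proof.
elim: q u => [|v q IH] u /=.
  by move=> _; rewrite /l1dist big1 // => i _; rewrite subrr.
case/andP=> huv /IH h; have := l1_tri u.1 v.1 (last v q).1.
have := l1_adj huv; lia.
Qed.

Lemma weight_count (d : nat) (Omega : Type) (eta : vertex d -> Omega -> bool)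
  (pi : seq (vertex d)) (w : Omega) :
  path_weight eta pi w = count (fun v => eta v w) pi.
Proof.
rewrite /path_weight; elim: pi => [|v pi IH]; first by rewrite big_nil.
by rewrite big_cons IH.
Qed.

Lemma count_uniq_sub (T : eqType) (P : pred T) (s t : seq T) :
  uniq s -> {subset s <= t} -> (count P s <= count P t)%N.
Proof.
move=> us st; rewrite -!size_filter; apply: uniq_leq_size.
  exact: filter_uniq.
by move=> z; rewrite !mem_filter => /andP[-> /st].
Qed.


Lemma meas_Q (R : realType) (d N : nat) (dm : measure_display)
  (Omega : measurableType dm) (P : probability Omega R)
  (eta : vertex d -> Omega -> bool) (p : R) :
  bernoulli_field N P eta p ->
  forall (S : seq (vertex d)), all (inXi N) S -> forall Q : pred (seq bool),
  measurable [set w | Q (map (fun v => eta v w) S)].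
Proof.
move=> [hm _]; elim => [|v S IH] /=.
  move=> _ Q; case: (boolP (Q [::])) => hQ.
    by rewrite (_ : [set w | _] = setT) //; apply/seteqP; split.
  by rewrite (_ : [set w | _] = set0) //; apply/seteqP; split => // w /= /negP.
case/andP => hv hS Q.
have -> : [set w | Q (eta v w :: map (fun v => eta v w) S)] =
  ([set w | eta v w] `&` [set w | Q (true :: map (fun v => eta v w) S)]) `|`
  (~` [set w | eta v w] `&` [set w | Q (false :: map (fun v => eta v w) S)]).
  apply/seteqP; split => w /=.
    by case: (eta v w) => h; [left|right].
  by case=> -[]; case: (eta v w).
apply: measurableU; apply: measurableI.
- exact: hm.
- exact: (IH hS (fun l => Q (true :: l))).
- by apply: measurableC; exact: hm.
- exact: (IH hS (fun l => Q (false :: l))).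
Qed.

Lemma mem_bigsetU (T : Type) (I : eqType) (F : I -> set T) (r : seq I) i w :
  i \in r -> F i w -> (\big[setU/set0]_(j <- r) F j) w.
Proof.
elim: r => [|j r IH] //=; rewrite inE big_cons => /orP[/eqP ->|hi] hw.
  by left.
by right; apply: IH.
Qed.

Lemma union_bound (R : realType) (dm : measure_display)
  (Omega : measurableType dm) (P : probability Omega R)
  (I : finType) (F : I -> set Omega) (A : set Omega) :
  measurable A -> (forall i, measurable (F i)) ->
  (forall w, A w -> exists i, F i w) ->
  (P A <= \sum_(i : I) P (F i))%E.
Proof.
move=> mA mF hA.
have sub : A `<=` \big[setU/set0]_(j <- enum I) F j.
  move=> w /hA [i hi]; apply: (mem_bigsetU (i:=i)) => //.
  by rewrite mem_enum.
have mU : forall r, measurable (\big[setU/set0]_(j <- r) F j).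
  by move=> r; apply: bigsetU_measurable => i _.
apply: (le_trans (le_measure _ _ _ sub)); rewrite ?inE //.
rewrite [X in (_ <= X)%E](_ : _ = \sum_(i <- enum I) P (F i))%E; last first.
  by rewrite big_enum.
elim: (enum I) => [|j r IH]; first by rewrite !big_nil measure0.
rewrite !big_cons; apply: le_trans (measureU2 _ _ _) _ => //.
by apply: leeD.
Qed.


Lemma prod_bound (R : realType) (T : Type) (S : seq T) (bf : T -> bool) (p : R) :
  0 <= p -> p <= 1 ->
  \prod_(v <- S) (if bf v then p else 1 - p) <= (1 - p) ^+ (count (fun v => ~~ bf v) S).
Proof.
move=> p0 p1; elim: S => [|v S IH]; first by rewrite big_nil.
have q0 : 0 <= 1 - p by lra.
have X0 : 0 <= \prod_(v <- S) (if bf v then p else 1 - p).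
  by apply: prodr_ge0 => i _; case: (bf i).
rewrite big_cons /=; case: (bf v) => /=.
  by rewrite -[X in _ <= X]mul1r; apply: ler_pM.
by rewrite add1n exprS; apply: ler_pM.
Qed.

Lemma map_bf (T : eqType) (S : seq T) (bt : seq bool) :
  uniq S -> size bt = size S ->
  map (fun v => nth false bt (index v S)) S = bt.
Proof.
case: S => [|x0 S'] uS hs; first by case: bt hs.
apply: (@eq_from_nth _ false); first by rewrite size_map hs.
move=> i; rewrite size_map => hi.
by rewrite (nth_map x0) // index_uniq.
Qed.

Lemma P_E (R : realType) (d N : nat) (dm : measure_display)
  (Omega : measurableType dm) (P : probability Omega R)
  (eta : vertex d -> Omega -> bool) (p : R) :
  bernoulli_field N P eta p -> 0 <= p -> p <= 1 ->
  forall (S : seq (vertex d)), uniq S -> all (inXi N) S -> forall m : nat,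
  (P [set w | (m <= count (fun v => ~~ eta v w) S)%N]
    <= ((2 ^ size S)%:R * (1 - p) ^+ m)%:E)%E.
Proof.
move=> hb p0 p1 S uS aS m.
have q0 : 0 <= 1 - p by lra.
pose C (bt : (size S).-tuple bool) : set Omega :=
  if (m <= count negb bt)%N then [set w | map (fun v => eta v w) S == bt]
  else set0.
have mC : forall bt, measurable (C bt).
  move=> bt; rewrite /C; case: ifP => _ //.
  exact: (meas_Q hb aS (fun l => l == bt)).
have mE : measurable [set w | (m <= count (fun v => ~~ eta v w) S)%N].
  have := meas_Q hb aS (fun l => (m <= count negb l)%N).
  by congr measurable; apply/seteqP; split => w /=; rewrite count_map.
apply: le_trans (union_bound P mE mC _) _.
  move=> w hw; exists (map_tuple (fun v => eta v w) (in_tuple S)).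
  by rewrite /C /= count_map hw /=.
have hC : forall bt, (P (C bt) <= ((1 - p) ^+ m)%:E)%E.
  move=> bt; rewrite /C; case: ifP => hm; last first.
    by rewrite measure0 lee_fin; apply: exprn_ge0.
  pose bf v := nth false bt (index v S).
  have -> : [set w | map (fun v => eta v w) S == bt] =
      \bigcap_(v in [set` S]) [set w | eta v w = bf v].
    apply/seteqP; split => w /=.
      move=> /eqP hw v /= vS.
      have : map (fun v => eta v w) S = map bf S.
        by rewrite hw map_bf // size_tuple.
      by move/eq_in_map => /(_ v vS).
    move=> hw; apply/eqP; rewrite -[X in _ = X](map_bf uS (size_tuple bt)).
    by apply/eq_in_map => v vS; apply: hw.
  rewrite hb.2 // lee_fin; apply: le_trans (prod_bound _ _ p0 p1) _.
  apply: ler_wiXn2l => //; first lra.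
  by rewrite -(count_map bf negb) map_bf // size_tuple.
apply: (@le_trans _ _ (\sum_(bt : (size S).-tuple bool) ((1 - p) ^+ m)%:E)%E).
  by apply: lee_sum => bt _; apply: hC.
rewrite sumEFin lee_fin sumr_const card_tuple card_bool.
by rewrite mulr_natl.
Qed.


Lemma sumsq_le (R : realType) (I : Type) (r : seq I) (b : I -> R) :
  (forall i, 0 <= b i) -> \sum_(i <- r) b i ^+ 2 <= (\sum_(i <- r) b i) ^+ 2.
Proof.
move=> b0; elim: r => [|i r IH]; first by rewrite !big_nil expr0n.
rewrite !big_cons.
have s0 : 0 <= \sum_(j <- r) b j by apply: sumr_ge0.
have := b0 i; nra.
Qed.

Lemma normx_le (R : realType) (d : nat) (x : {ffun 'I_d -> int}) :
  normx R x <= (l1dist [ffun=> 0] x)%:R.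
Proof.
rewrite /normx /l1dist natr_sum.
have e : forall i : 'I_d, (((`|([ffun=> 0%R] : {ffun 'I_d -> int}) i - x i|)%N)%:R : R) = `|(x i)%:~R|.
  by move=> i; rewrite ffunE sub0r abszN natr_absz intr_norm.
under eq_bigr do rewrite e.
have -> : \sum_(i < d) ((x i)%:~R : R) ^+ 2 = \sum_(i < d) `|((x i)%:~R : R)| ^+ 2.
  by apply: eq_bigr => i _; rewrite real_normK // num_real.
have s0 : 0 <= \sum_(i < d) `|((x i)%:~R : R)| by apply: sumr_ge0.
rewrite -[X in _ <= X]ger0_norm // -sqrtr_sqr ler_sqrt; last exact: exprn_ge0.
exact: sumsq_le.
Qed.

Lemma exp_bound (R : realType) (n : nat) (y : R) : y <= (2 * n + 1)%:R ->
  (2^-1) ^+ n <= 2 * expR (- (4^-1 * y)).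
Proof.
move=> hy.
have h1 : expR (- (4^-1 * (2 * n + 1)%:R)) <= expR (- (4^-1 * y)).
  rewrite ler_expR; lra.
have h2 : - (4^-1 * (2 * n + 1)%:R) = n%:R * (- 2^-1) + (- 4^-1) :> R.
  rewrite natrD natrM; lra.
rewrite h2 expRD expRM_natl in h1.
have h3 : 2^-1 <= expR (- 2^-1 : R) by have := expR_ge1Dx (- 2^-1 : R); lra.
have h4 : 3/4 <= expR (- 4^-1 : R) by have := expR_ge1Dx (- 4^-1 : R); lra.
have h5 : (2^-1) ^+ n <= expR (- 2^-1 : R) ^+ n.
  by apply: lerXn2r => //; rewrite ?nnegrE //; apply: expR_ge0.
have h6 : 0 <= (2^-1 : R) ^+ n by apply: exprn_ge0.
have h7 : 0 <= expR (- 2^-1 : R) ^+ n by apply: exprn_ge0; apply: expR_ge0.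
nra.
Qed.


Lemma num_bound (R : realType) (D q : R) (n' m : nat) : 1 <= D -> 0 <= q ->
  q <= 1 / (16 * D ^+ 2) -> (n'.+1 <= 2 * m)%N ->
  D ^+ n' * (2 ^+ n'.+1 * q ^+ m) <= (2^-1) ^+ n'.+1.
Proof.
move=> D1 q0 qD hm.
have D0 : 0 < D by lra.
set r := 1 / (4 * D).
have r0 : 0 <= r by rewrite /r; apply: divr_ge0 => //; lra.
have r1 : r <= 1 by rewrite /r ler_pdivrMr; lra.
have qr : q <= r ^+ 2.
  rewrite /r expr_div_n expr1n exprMn.
  by have -> : (4 : R) ^+ 2 = 16 by rewrite expr2; lra.
have h1 : q ^+ m <= r ^+ n'.+1.
  apply: le_trans (_ : (r ^+ 2) ^+ m <= _).
    by apply: lerXn2r; rewrite // ?nnegrE // exprn_ge0.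
  by rewrite -exprM; apply: ler_wiXn2l.
have h2 : D ^+ n' <= D ^+ n'.+1 by rewrite exprS ler_peMl // exprn_ge0 // ltW.
have e : D ^+ n'.+1 * (2 ^+ n'.+1 * r ^+ n'.+1) = (2^-1) ^+ n'.+1.
  rewrite -!exprMn; congr (_ ^+ _); rewrite /r; field; lra.
rewrite -e; apply: ler_pM => //.
- by apply: exprn_ge0; apply: ltW.
- by apply: mulr_ge0; apply: exprn_ge0.
- by apply: ler_pM => //; apply: exprn_ge0.
Qed.


Lemma xpath_all (d N : nat) (x : {ffun 'I_d -> int}) (pi : seq (vertex d)) :
  is_xpath N x pi -> all (inXi N) pi.
Proof. by case: pi => // v s /and4P[]. Qed.

Lemma ev_meas (R : realType) (d N : nat) (dm : measure_display)
  (Omega : measurableType dm) (P : probability Omega R)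
  (eta : vertex d -> Omega -> bool) (p : R) :
  bernoulli_field N P eta p -> forall (x : {ffun 'I_d -> int}) (t : R),
  measurable [set w | (passage_time R N eta x w < t%:E)%E] /\
  forall w, (passage_time R N eta x w < t%:E)%E ->
   exists pi, is_xpath N x pi /\ (path_weight eta pi w)%:R < t.
Proof.
move=> hb x t.
pose G (pi : seq ({ffun 'I_d -> int} * nat)) : set Omega :=
  if is_xpath N x pi then [set w | (path_weight eta pi w)%:R < t] else set0.
have hev : [set w | (passage_time R N eta x w < t%:E)%E] = \bigcup_pi G pi.
  apply/seteqP; split => w /=.
    move/ereal_inf_ltP => [y [pi hpi <-]]; rewrite lte_fin => hlt.
    by exists pi => //; rewrite /G; move: hpi; rewrite /= => ->.
  move=> [pi _]; rewrite /G; case: ifP => // hpi /= hlt.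
  apply: le_lt_trans (_ : _ <= ((path_weight eta pi w)%:R)%:E)%E _.
    by apply: ereal_inf_lbound; exists pi.
  by rewrite lte_fin.
split.
  rewrite hev; apply: countable_bigcupT_measurable; first exact: countableP.
  move=> pi; rewrite /G; case: ifP => // hpi.
  have := meas_Q hb (xpath_all hpi) (fun l => (count id l)%:R < t).
  congr measurable; apply/seteqP; split => w /=;
    by rewrite weight_count count_map.
move=> w hw; have : (\bigcup_pi G pi) w by rewrite -hev.
case=> pi _; rewrite /G; case: ifP => // hpi hlt.
by exists pi.
Qed.


Unset Implicit Arguments. Set Strict Implicit.

Theorem lemma3p2 (R : realType) (d : nat) : (1 <= d)%N ->
  exists kappa : R, 0 < kappa /\
  forall p : R, 1 - kappa < p -> p <= 1 ->
  exists phi c1 c2 : R, [/\ 0 < phi, 0 < c1 & 0 < c2] /\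
  forall N : nat, (1 <= N)%N ->
  forall (dm : measure_display) (Omega : measurableType dm)
         (P : probability Omega R) (eta : vertex d -> Omega -> bool),
  bernoulli_field N P eta p ->
  forall x : {ffun 'I_d -> int}, inA x ->
  (P [set w | (passage_time R N eta x w < (phi * normx R x)%:E)%E]
    <= (c1 * expR (- (c2 * normx R x)))%:E)%E.
Proof.
move=> d1.
pose D : nat := #|Step d|.
have D1 : (1 <= D)%N by rewrite /D card_sum card_bool.
have D1r : 1 <= (D%:R : R) by rewrite ler1n.
exists (1 / (16 * (D%:R) ^+ 2)); split.
  by apply: divr_gt0 => //; apply: mulr_gt0 => //; apply: exprn_gt0; lra.
move=> p hp1 hp2.
have kle : 1 / (16 * (D%:R : R) ^+ 2) <= 1.
  rewrite ler_pdivrMr; last by apply: mulr_gt0 => //; apply: exprn_gt0; lra.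
  have : 1 <= (D%:R : R) ^+ 2 by rewrite expr2; nra.
  lra.
have p0 : 0 <= p by lra.
have q0 : 0 <= 1 - p by lra.
have qk : 1 - p <= 1 / (16 * (D%:R : R) ^+ 2) by lra.
exists (8^-1), 2, (4^-1); split; first by split.
move=> N N1 dm Omega P eta hb x xA.
set L := l1dist ([ffun=> 0%R] : {ffun 'I_d -> int}) x.
set n := (L %/ 2)%N.
have hL : (L <= 2 * n + 1)%N by rewrite /n; lia.
have [mev hev] := ev_meas hb x (8^-1 * normx R x).
set ev := [set w | _].
suff : (P ev <= ((2^-1) ^+ n)%:E)%E.
  move=> h; apply: le_trans h _; rewrite lee_fin.
  apply: exp_bound; apply: le_trans (normx_le R x) _.
  by rewrite ler_nat.
case En : n => [|n'].
  by rewrite expr0; apply: probability_le1.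
pose m := (n - n %/ 2)%N.
have hm : (n'.+1 <= 2 * m)%N by rewrite /m -En; lia.
pose W (t : n'.-tuple (Step d)) := origin d :: walk N (origin d) t.
pose F (t : n'.-tuple (Step d)) : set Omega :=
  if uniq (W t) && all (inXi N) (W t) then
    [set w | (m <= count (fun v => ~~ eta v w) (W t))%N] else set0.
have mF : forall t, measurable (F t).
  move=> t; rewrite /F; case: ifP => // /andP[_ hall].
  have := meas_Q hb hall (fun l => (m <= count negb l)%N).
  by congr measurable; apply/seteqP; split => w /=; rewrite count_map.
have cover : forall w, ev w -> exists t, F t w.
  move=> w /hev [[|v0 s0] [hpi hlt]] //.
  move: hpi => /and4P[/eqP hv0 hpath hlast hall].
  move: hlast; case: (shortenP hpath) => p' hp' hu hsub /eqP hlast.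
  have hallg : all (inXi N) (v0 :: p').
    apply/allP => v; rewrite inE => /orP[/eqP ->|/hsub vs].
      by apply: (allP hall); rewrite mem_head.
    by apply: (allP hall); rewrite inE vs orbT.
  have hsz : (L <= 2 * size p')%N.
    have := path_l1 hp'; rewrite hlast hv0 /=.
    by rewrite /L.
  have hn' : (n' <= size p')%N.
    have : (n <= size p')%N by rewrite /n; move: hsz; clear; lia.
    by rewrite En; apply: ltnW.
  have hpt : path (adjXi N) v0 (take n' p').
    by move: hp'; rewrite -[X in path _ _ X](cat_take_drop n') cat_path => /andP[].
  have halt : all (inXi N) (v0 :: take n' p').
    apply/allP => v; rewrite inE => /orP[/eqP ->|vs].
      by apply: (allP hallg); rewrite mem_head.
    by apply: (allP hallg); rewrite inE (mem_take vs) orbT.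
  have [st hst] := path_steps N1 hpt halt.
  have hsst : size st == n'.
    by rewrite -(size_scanl (fun v s => app N s v) v0) -/(walk N v0 st) hst size_takel.
  exists (Tuple hsst).
  have hW : W (Tuple hsst) = v0 :: take n' p' by rewrite /W /= -hv0 hst.
  have hut : uniq (v0 :: take n' p').
    by have := take_uniq n'.+1 hu.
  rewrite /F hW hut halt /=.
  have c1 : (count (fun v => eta v w) (v0 :: take n' p') <=
             count (fun v => eta v w) (v0 :: s0))%N.
    apply: count_uniq_sub => // v; rewrite inE => /orP[/eqP ->|vs].
      by rewrite mem_head.
    by rewrite inE (hsub _ (mem_take vs)) orbT.
  change (m <= count (fun v => ~~ eta v w) (v0 :: take n' p'))%N.
  move: hlt; rewrite weight_count => hlt.
  have hnx := normx_le R x.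
  have hLr : (L%:R : R) <= (2 * n + 1)%:R by rewrite ler_nat.
  have hc : (8 * count (fun v => eta v w) (v0 :: s0) < 2 * n + 1)%N.
    rewrite -(ltr_nat R) natrM.
    move: hlt hnx hLr; rewrite -/L.
    have -> : (8%:R : R) = 8 by []. lra.
  have hp := count_predC (fun v => eta v w) (v0 :: take n' p').
  have hsz' : size (v0 :: take n' p') = n'.+1 by rewrite /= size_takel.
  rewrite hsz' in hp.
  have -> : count (fun v => ~~ eta v w) (v0 :: take n' p') =
    count (predC (fun v => eta v w)) (v0 :: take n' p') by apply: eq_count.
  rewrite /m En; rewrite En in hc; move: c1 hc hp.
  generalize (count (fun v => eta v w) (v0 :: take n' p')).
  generalize (count (fun v => eta v w) (v0 :: s0)).
  generalize (count (predC (fun v => eta v w)) (v0 :: take n' p')).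
  clear; lia.
apply: le_trans (union_bound P mev mF cover) _.
have hF : forall t, (P (F t) <= ((2 ^ n)%:R * (1 - p) ^+ m)%:E)%E.
  move=> t; rewrite /F; case: ifP => [/andP[hu ha]|_]; last first.
    rewrite measure0 lee_fin; apply: mulr_ge0 => //; apply: exprn_ge0 => //.
  have := P_E hb p0 hp2 hu ha m.
  by rewrite /W /= /walk size_scanl size_tuple En.
apply: (@le_trans _ _ (\sum_(t : n'.-tuple (Step d)) ((2 ^ n)%:R * (1 - p) ^+ m)%:E)%E).
  by apply: lee_sum => t _; apply: hF.
rewrite sumEFin lee_fin sumr_const card_tuple -/D En.
rewrite -[_ *+ D ^ n']mulr_natl !natrX.
by apply: num_bound.
Qed.
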